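(* Let $1\leq\delta\leq k$, let $V=\mathbb{F}_{q^k}\times\mathbb{F}_{q^k}$ viewed as a $2k$-dimensional $\mathbb{F}_q$-space, and let $\mathcal{G}=\mathcal{G}_{2k,k,\delta}$ be the set of all $\mathbb{F}_q$-subspaces $$G(a_0,\dots,a_{k-\delta})=\Big\{\big(x,\textstyle\sum_{i=0}^{k-\delta}a_ix^{q^i}\big):x\in\mathbb{F}_{q^k}\Big\},\qquad a_0,\dots,a_{k-\delta}\in\mathbb{F}_{q^k}.$$ Let $\perp$ denote orthogonality with respect to the nondegenerate $\mathbb{F}_q$-bilinear form $\langle(a,b),(x,y)\rangle=\mathrm{Tr}(ax+by)$, where $\mathrm{Tr}(z)=z+z^q+\dots+z^{q^{k-1}}$. Then there is an $\mathbb{F}_q$-linear bijection $\phi\colon V\to V$ with $\phi(X^\perp)\in\mathcal{G}$ for all $X\in\mathcal{G}$ and $\{\phi(X^\perp):X\in\mathcal{G}\}=\mathcal{G}$; consequently $\mathcal{G}$ is invariant under a correlation of the projective geometry $\mathrm{PG}(V)$. Moreover, every correlation of $\mathrm{PG}(V)$ mapping $\mathcal{G}$ onto itself fixes the subspace $S=\{0\}\times\mathbb{F}_{q^k}$.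
   Context: A correlation of $\mathrm{PG}(V)$ is an inclusion-reversing bijection of the set of subspaces of $V$ induced by a semilinear map composed with taking orthogonal complements (equivalently, an inclusion-reversing bijection of the subspace lattice). Each element of $\mathcal{G}$ is a $k$-dimensional subspace. *)

(* Defs.v *)
From HB Require Import structures.
From mathcomp Require Import all_boot all_order all_algebra all_field.
Set Implicit Arguments. Unset Strict Implicit. Unset Printing Implicit Defensive.
Import GRing.Theory.
Local Open Scope ring_scope.

Section Defs.
Variable L : finFieldType.
Variable q : nat.

(* The subfield F_q = {c | c^q = c} (when #|L| = q^k, q a power of char L). *)
Definition Fq : {set L} := [set c : L | c ^+ q == c].

Definition vadd (u v : L * L) : L * L := (u.1 + v.1, u.2 + v.2).
Definition vscale (c : L) (u : L * L) : L * L := (c * u.1, c * u.2).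

Definition is_subspace (S : {set L * L}) : Prop :=
  [/\ (0, 0) \in S,
      (forall u v, u \in S -> v \in S -> vadd u v \in S) &
      (forall c u, c \in Fq -> u \in S -> vscale c u \in S)].

Definition Fq_linear (phi : L * L -> L * L) : Prop :=
  (forall u v, phi (vadd u v) = vadd (phi u) (phi v)) /\
  (forall c u, c \in Fq -> phi (vscale c u) = vscale c (phi u)).

Definition Tr (k : nat) (z : L) : L := \sum_(i < k) z ^+ (q ^ i)%N.

Definition form (k : nat) (u v : L * L) : L := Tr k (u.1 * v.1 + u.2 * v.2).

Definition perp (k : nat) (X : {set L * L}) : {set L * L} :=
  [set v | [forall u in X, form k u v == 0]].

Definition Gsub (k delta : nat) (a : (k - delta).+1.-tuple L) : {set L * L} :=
  [set (x, \sum_(i < (k - delta).+1) tnth a i * x ^+ (q ^ i)%N) | x : L].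

Definition calG (k delta : nat) : {set {set L * L}} :=
  [set Gsub a | a : (k - delta).+1.-tuple L].

Definition Ssub : {set L * L} := [set u : L * L | u.1 == 0].

(* A correlation of PG(V): an inclusion-reversing bijection of the lattice
   of F_q-subspaces of V (values of f on non-subspaces are irrelevant). *)
Definition correlation (f : {set L * L} -> {set L * L}) : Prop :=
  [/\ (forall A, is_subspace A -> is_subspace (f A)),
      (forall A B, is_subspace A -> is_subspace B -> f A = f B -> A = B),
      (forall B, is_subspace B -> exists2 A, is_subspace A & f A = B) &
      (forall A B, is_subspace A -> is_subspace B ->
         (A \subset B) = (f B \subset f A))].
End Defs.

(* Main.v *)
Require Import Defs.
From HB Require Import structures.
From mathcomp Require Import all_boot all_order all_algebra all_field.
From mathcomp.algebra_tactics Require Import ring.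
From mathcomp Require Import zify.
Set Implicit Arguments. Unset Strict Implicit. Unset Printing Implicit Defensive.
Import GRing.Theory.
Local Open Scope ring_scope.

Section Basics.
Variables (L : finFieldType) (p e k : nat).
Hypotheses (pr_p : prime p) (e_gt0 : (0 < e)%N) (k_gt0 : (0 < k)%N)
  (cardL : #|L| = ((p ^ e) ^ k)%N).
Local Notation q := (p ^ e)%N.

Lemma q_gt1 : (1 < q)%N.
Proof.
have p2 := prime_gt1 pr_p.
apply: leq_trans p2 _; rewrite -[X in (X <= _)%N]expn1.
exact: leq_pexp2l (prime_gt0 pr_p) e_gt0.
Qed.

Lemma q_gt0 : (0 < q)%N.
Proof. exact: ltnW q_gt1. Qed.

Lemma charL : p \in [pchar L].
Proof. by apply: (@card_finPcharP _ p (e * k)); rewrite // expnM. Qed.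

Lemma frob0 m : (0 : L) ^+ (q ^ m) = 0.
Proof. by rewrite expr0n expn_eq0 eqn0Ngt q_gt0. Qed.

Lemma frobD m (x y : L) : (x + y) ^+ (q ^ m) = x ^+ (q ^ m) + y ^+ (q ^ m).
Proof.
apply: exprDn_pchar; rewrite -expnM pnatX (pnatE _ pr_p) charL //.
Qed.

Lemma frobN m (x : L) : (- x) ^+ (q ^ m) = - x ^+ (q ^ m).
Proof.
apply/eqP; rewrite -subr_eq0 opprK -frobD addNr frob0 //.
Qed.

Lemma frobB m (x y : L) : (x - y) ^+ (q ^ m) = x ^+ (q ^ m) - y ^+ (q ^ m).
Proof. by rewrite frobD frobN. Qed.

Lemma frob_sum m (I : Type) (r : seq I) (P : pred I) (F : I -> L) :
  (\sum_(i <- r | P i) F i) ^+ (q ^ m) = \sum_(i <- r | P i) (F i) ^+ (q ^ m).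
Proof. exact: (big_morph _ (frobD m) (frob0 m)). Qed.

Lemma frobk (x : L) : x ^+ (q ^ k) = x.
Proof. by rewrite -cardL expf_card. Qed.

Lemma frob_inj m : injective (fun x : L => x ^+ (q ^ m)).
Proof.
move=> x y /= /eqP; rewrite -subr_eq0 -frobB expf_eq0 subr_eq0 => /andP[_ /eqP] //.
Qed.

Lemma Fq_pow (c : L) m : c \in Fq L q -> c ^+ (q ^ m) = c.
Proof.
rewrite inE => /eqP cq; elim: m => [|m IH]; first by rewrite expr1.
by rewrite expnS exprM cq IH.
Qed.

Lemma Fq0 : (0 : L) \in Fq L q.
Proof. by rewrite inE -[X in _ ^+ X]expn1 frob0. Qed.

Lemma Fq1 : (1 : L) \in Fq L q.
Proof. by rewrite inE expr1n. Qed.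

Lemma FqP (c : L) : reflect (c ^+ (q ^ 1) = c) (c \in Fq L q).
Proof. by rewrite inE expn1; apply: eqP. Qed.

Lemma FqD (a b : L) : a \in Fq L q -> b \in Fq L q -> a + b \in Fq L q.
Proof. by move=> /FqP ha /FqP hb; apply/FqP; rewrite frobD ha hb. Qed.

Lemma FqN (a : L) : a \in Fq L q -> - a \in Fq L q.
Proof. by move=> /FqP ha; apply/FqP; rewrite frobN ha. Qed.

Lemma FqM (a b : L) : a \in Fq L q -> b \in Fq L q -> a * b \in Fq L q.
Proof. by rewrite !inE => /eqP ha /eqP hb; rewrite exprMn ha hb. Qed.

Lemma FqV (a : L) : a \in Fq L q -> a^-1 \in Fq L q.
Proof. by rewrite !inE => /eqP ha; rewrite exprVn ha. Qed.

Local Notation Tr := (@Defs.Tr L q k).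

Lemma TrD x y : Tr (x + y) = Tr x + Tr y.
Proof. by rewrite /Defs.Tr -big_split /=; apply: eq_bigr => i _; rewrite frobD. Qed.

Lemma TrN x : Tr (- x) = - Tr x.
Proof. by rewrite /Defs.Tr -sumrN; apply: eq_bigr => i _; rewrite frobN. Qed.

Lemma TrB x y : Tr (x - y) = Tr x - Tr y.
Proof. by rewrite TrD TrN. Qed.

Lemma Tr0 : Tr 0 = 0.
Proof. by rewrite /Defs.Tr big1 // => i _; rewrite frob0. Qed.

Lemma TrZ c x : c \in Fq L q -> Tr (c * x) = c * Tr x.
Proof.
move=> hc; rewrite /Defs.Tr mulr_sumr; apply: eq_bigr => i _.
by rewrite exprMn (Fq_pow _ hc).
Qed.

Lemma Tr_frob x : Tr (x ^+ q) = Tr x.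
Proof.
rewrite /Defs.Tr; case: k k_gt0 frobk => // k' _ fk.
rewrite big_ord_recr big_ord_recl /= expn0 expr1 -{3}(fk x) addrC.
congr (_ + _); first by rewrite expnS exprM.
by apply: eq_bigr => i _; rewrite /bump /= add1n expnS exprM.
Qed.

Lemma Tr_frobn m x : Tr (x ^+ (q ^ m)) = Tr x.
Proof.
elim: m => [|m IH]; first by rewrite expr1.
by rewrite expnSr exprM Tr_frob IH.
Qed.

Lemma Tr_Fq x : Tr x \in Fq L q.
Proof.
apply/FqP; rewrite -{2}(Tr_frob x) frob_sum /Defs.Tr; apply: eq_bigr => i _.
by rewrite -!exprM expn1 mulnC.
Qed.

Lemma Tr_nondeg w : (forall x, Tr (x * w) = 0) -> w = 0.
Proof.
move=> H; case: (eqVneq w 0) => // wn0; exfalso.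
pose P := \sum_(i < k) (w ^+ (q ^ i))%:P * 'X^(q ^ i).
have Pval x : P.[x] = Tr (x * w).
  rewrite horner_sum /Defs.Tr; apply: eq_bigr => i _.
  by rewrite hornerCM hornerXn exprMn mulrC.
have km : k = k.-1.+1 by rewrite prednK.
have coefP : P`_(q ^ k.-1) = w ^+ (q ^ k.-1).
  have hk : (k.-1 < k)%N by rewrite ltn_predL.
  rewrite coef_sum (bigD1 (Ordinal hk)) //= coefCM coefXn eqxx mulr1.
  rewrite big1 ?addr0 // => i ine.
  rewrite coefCM coefXn eqn_exp2l ?q_gt1 //.
  case: eqP => [hi|_]; last by rewrite mulr0.
  by case/eqP: ine; apply: val_inj => /=; rewrite hi.
have P0 : P != 0.
  apply/eqP => P0; move: coefP; rewrite P0 coef0 => /esym/eqP.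
  by rewrite expf_eq0 (negbTE wn0) andbF.
have szP : (size P <= (q ^ k.-1).+1)%N.
  apply: leq_trans (size_sum _ _ _) _; apply/bigmax_leqP => i _.
  rewrite size_Cmul ?expf_neq0 // size_polyXn ltnS leq_pexp2l ?q_gt0 //.
  by rewrite -ltnS prednK.
have hall : all (root P) (enum L) by apply/allP => x _; rewrite /root Pval H.
have := max_poly_roots P0 hall (enum_uniq _).
rewrite -cardE cardL => hlt.
have := leq_trans hlt szP; rewrite {1}km expnS ltnS => h.
have hpos : (0 < q ^ k.-1)%N by rewrite expn_gt0 q_gt0.
by have := ltn_Pmull q_gt1 hpos; rewrite ltnNge h.
Qed.


Local Notation form := (@Defs.form L q k).
Local Notation perp := (@Defs.perp L q k).
Local Notation subsp := (@is_subspace L q).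
Local Notation z2 := ((0 : L), (0 : L)).

Lemma formC u v : form u v = form v u.
Proof. by rewrite /Defs.form !(mulrC u.1) !(mulrC u.2). Qed.

Lemma form_addl u w v : form (vadd u w) v = form u v + form w v.
Proof. by rewrite /Defs.form -TrD /=; congr Tr; rewrite !mulrDl addrACA. Qed.

Lemma form_addr u v w : form u (vadd v w) = form u v + form u w.
Proof. by rewrite formC form_addl !(formC u). Qed.

Lemma form_scalel c u v : c \in Fq L q -> form (vscale c u) v = c * form u v.
Proof. by move=> hc; rewrite /Defs.form -TrZ //= -!mulrA -mulrDr. Qed.

Lemma form_scaler c u v : c \in Fq L q -> form u (vscale c v) = c * form u v.
Proof. by move=> hc; rewrite formC form_scalel // formC. Qed.

Lemma form_Fq u v : form u v \in Fq L q.
Proof. exact: Tr_Fq. Qed.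

Lemma form0l v : form z2 v = 0.
Proof. by rewrite /Defs.form /= !mul0r addr0 Tr0. Qed.

Lemma perpPP v (A : {set L * L}) : reflect (forall u, u \in A -> form u v = 0) (v \in perp A).
Proof.
rewrite inE; apply: (iffP forall_inP) => H u /H; first by move/eqP.
by move=> ->.
Qed.

Lemma Fqm1 : (-1 : L) \in Fq L q.
Proof. exact: FqN Fq1. Qed.

Lemma vsubP (A : {set L * L}) u v : subsp A -> u \in A -> v \in A -> vadd u (vscale (-1) v) \in A.
Proof. by case=> _ hD hS hu hv; apply: hD => //; apply: hS => //; apply: Fqm1. Qed.

Lemma perp_subspace (A : {set L * L}) : subsp (perp A).
Proof.
split.
- by apply/perpPP => u _; rewrite formC form0l.
- by move=> u v /perpPP hu /perpPP hv; apply/perpPP => x hx; rewrite form_addr hu ?hv ?addr0.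
- by move=> c u hc /perpPP hu; apply/perpPP => x hx; rewrite form_scaler ?hu ?mulr0.
Qed.

Lemma perp_anti (A B : {set L * L}) : A \subset B -> perp B \subset perp A.
Proof.
by move=> /subsetP sAB; apply/subsetP => v /perpPP h; apply/perpPP => u /sAB /h.
Qed.

Lemma sub_perpperp (A : {set L * L}) : A \subset perp (perp A).
Proof.
by apply/subsetP => u hu; apply/perpPP => v /perpPP h; rewrite formC h.
Qed.

Lemma perp_z2 : perp [set z2] = setT.
Proof.
by apply/setP => v; rewrite in_setT; apply/perpPP => u; rewrite inE => /eqP ->; rewrite form0l.
Qed.

Lemma perp_T : perp setT = [set z2].
Proof.
apply/setP => -[a b]; rewrite in_set1; apply/perpPP/eqP => [H|[-> ->] u _].
  have ha : a = 0.
    apply: Tr_nondeg => x; have := H (x, 0) (in_setT _).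
    by rewrite /Defs.form /= mul0r addr0.
  have hb : b = 0.
    apply: Tr_nondeg => x; have := H (0, x) (in_setT _).
    by rewrite /Defs.form /= mul0r add0r.
  by rewrite ha hb.
by rewrite formC form0l.
Qed.

Lemma z2_subspace : subsp [set z2].
Proof.
split.
- by rewrite inE.
- by move=> u v; rewrite !inE => /eqP -> /eqP ->; rewrite /vadd /= addr0.
- by move=> c u _; rewrite !inE => /eqP ->; rewrite /vscale /= mulr0.
Qed.

Lemma T_subspace : subsp setT.
Proof. by split=> *; rewrite inE. Qed.


Definition spanw (A : {set L * L}) (w : L * L) : {set L * L} :=
  [set vadd x.1 (vscale x.2 w) | x in setX A (Fq L q)].

Lemma spanw_subspace (A : {set L * L}) w : subsp A -> subsp (spanw A w).
Proof.
move=> [h0 hD hS]; split.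
- apply/imsetP; exists (z2, 0); first by rewrite inE /= h0 Fq0.
  by rewrite /vadd /vscale /= !mul0r addr0.
- move=> u v /imsetP[[a c] /setXP[ha hc] ->] /imsetP[[a' c'] /setXP[ha' hc'] ->] /=.
  apply/imsetP; exists (vadd a a', c + c'); first by rewrite inE /= hD ?FqD.
  by rewrite /vadd /vscale /=; congr (_, _); ring.
- move=> d u hd /imsetP[[a c] /setXP[ha hc] ->] /=.
  apply/imsetP; exists (vscale d a, d * c); first by rewrite inE /= hS ?FqM.
  by rewrite /vadd /vscale /=; congr (_, _); ring.
Qed.

Lemma spanw_sub (A : {set L * L}) (B : {set L * L}) w :
  subsp B -> A \subset B -> w \in B -> spanw A w \subset B.
Proof.
move=> [h0 hD hS] /subsetP sAB wB; apply/subsetP => u.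
by case/imsetP => -[a c] /setXP[ha hc] -> /=; apply: hD; [apply: sAB | apply: hS].
Qed.

Lemma sub_spanw (A : {set L * L}) w : subsp A -> A \subset spanw A w.
Proof.
move=> _; apply/subsetP => a ha; apply/imsetP; exists (a, 0).
  by rewrite inE ha Fq0.
by rewrite /vadd /vscale /= !mul0r !addr0; case: a {ha}.
Qed.

Lemma mem_spanw (A : {set L * L}) w : subsp A -> w \in spanw A w.
Proof.
case=> h0 _ _; apply/imsetP; exists (z2, 1); first by rewrite inE /= h0 Fq1.
by rewrite /vadd /vscale /= !mul1r !add0r; case: w.
Qed.

Lemma card_spanw (A : {set L * L}) w : subsp A -> w \notin A ->
  #|spanw A w| = (#|Fq L q| * #|A|)%N.
Proof.
move=> hA wA; rewrite /spanw card_in_imset; first by rewrite cardsX mulnC.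
move=> [a c] [a' c'] /setXP[/= ha hc] /setXP[/= ha' hc'].
rewrite /vadd /vscale /= => -[E1 E2].
case: (eqVneq c c') => [ecc|ncc].
  subst c'; congr (_, _); case: a a' E1 E2 {ha ha'} => [a1 a2] [a1' a2'] /=.
  by move=> /addIr -> /addIr ->.
exfalso; move/negP: wA; apply.
have dn0 : c - c' != 0 by rewrite subr_eq0.
have -> : w = vscale (c - c')^-1 (vadd a' (vscale (-1) a)).
  case: w E1 E2 => w1 w2 /= E1 E2; rewrite /vadd /vscale /=.
  have F1 : a'.1 = a.1 + c * w1 - c' * w1 by rewrite E1 addrK.
  have F2 : a'.2 = a.2 + c * w2 - c' * w2 by rewrite E2 addrK.
  rewrite F1 F2; congr (_, _); apply: (mulfI dn0); rewrite mulrA divff //; ring.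
case: (hA) => _ hD hS; apply: hS; first exact/FqV/FqD/FqN.
exact: vsubP.
Qed.

Lemma card_perp_step (A : {set L * L}) w :
  (#|perp A| <= #|Fq L q| * #|perp A :&: [set v | form w v == 0%R]|)%N.
Proof.
set K := perp A :&: _.
pose r c := odflt z2 [pick v in perp A | form w v == c].
pose g v := (form w v, vadd v (vscale (-1) (r (form w v)))).
have rP v : v \in perp A -> r (form w v) \in perp A /\ form w (r (form w v)) = form w v.
  move=> hv; rewrite /r; case: pickP => [v' /andP[hv' /eqP hf]|none] //=.
  by have := none v; rewrite hv eqxx.
rewrite -cardsX -(card_in_imset (f := g)).
  apply: subset_leq_card; apply/subsetP => x /imsetP[v hv ->].
  have [hr hf] := rP v hv.
  rewrite inE /= form_Fq /= in_setI (vsubP (perp_subspace A) hv hr) /= inE.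
  by rewrite form_addr form_scaler ?Fqm1 // hf mulN1r addrN.
move=> v1 v2 h1 h2 [hf].
rewrite -hf; case: (r _) => r1 r2; rewrite /vadd /vscale /=.
by case: v1 {h1 hf} => a1 b1; case: v2 {h2} => a2 b2 /= [/addIr -> /addIr ->].
Qed.


Lemma perp_mono (A B : {set L * L}) : subsp A -> subsp B -> A \subset B ->
  (#|A| * #|perp A| <= #|B| * #|perp B|)%N.
Proof.
move=> hA hB sAB.
move: {2}(#|B| - #|A|)%N (leqnn (#|B| - #|A|)) => n.
elim: n A hA sAB => [|n IH] A hA sAB hn.
  have -> // : A = B.
  by apply/eqP; rewrite eqEcard sAB /= -subn_eq0 -leqn0 hn.
case: (eqVneq A B) => [->//|nAB].
have [w wB wA] : exists2 w, w \in B & w \notin A.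
  apply/subsetPn; apply: contra nAB => sBA; by rewrite eqEsubset sAB sBA.
have hA' := spanw_subspace w hA.
have sA'B := spanw_sub hB sAB wB.
have cA' := card_spanw hA wA.
have ltA : (#|A| < #|spanw A w|)%N.
  apply: proper_card; rewrite properE sub_spanw //=; apply/subsetPn.
  by exists w; [exact: mem_spanw|].
have leB : (#|spanw A w| <= #|B|)%N by apply: subset_leq_card.
have := IH _ hA' sA'B ltac:(lia).
set K := perp A :&: [set v | form w v == 0%R].
have sK : K \subset perp (spanw A w).
  apply/subsetP => v; rewrite in_setI => /andP[/perpPP hv]; rewrite inE => /eqP hw.
  apply/perpPP => u /imsetP[[a c] /setXP[ha hc] ->] /=.
  by rewrite form_addl form_scalel // hw mulr0 hv ?addr0.
apply: leq_trans.
apply: (@leq_trans (#|A| * (#|Fq L q| * #|K|))).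
  by rewrite leq_mul2l card_perp_step orbT.
by rewrite mulnA (mulnC #|A|) -cA' leq_mul2l subset_leq_card ?orbT.
Qed.

Lemma card_perp (A : {set L * L}) : subsp A ->
  (#|A| * #|perp A|)%N = #|[set: L * L]|.
Proof.
move=> hA; apply/eqP; rewrite eqn_leq; apply/andP; split.
  have := perp_mono hA T_subspace (subsetT A).
  by rewrite perp_T cards1 muln1.
have z2A : [set z2] \subset A by rewrite sub1set; case: hA.
have := perp_mono z2_subspace hA z2A.
by rewrite perp_z2 cards1 mul1n.
Qed.

Lemma perpK (A : {set L * L}) : subsp A -> perp (perp A) = A.
Proof.
move=> hA; apply/eqP; rewrite eq_sym eqEcard sub_perpperp /=.
have h1 := card_perp hA.
have h2 := card_perp (perp_subspace A).
have pos : (0 < #|perp A|)%N.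
  by apply/card_gt0P; exists z2; case: (perp_subspace A).
rewrite -(leq_pmul2l pos) h2 -h1 mulnC //.
Qed.


Lemma subspaceI (A B : {set L * L}) : subsp A -> subsp B -> subsp (A :&: B).
Proof.
move=> [a0 aD aS] [b0 bD bS]; split; first by rewrite inE a0 b0.
  by move=> u v; rewrite !inE => /andP[ua ub] /andP[va vb]; rewrite aD ?bD.
by move=> c u hc; rewrite !inE => /andP[ua ub]; rewrite aS ?bS.
Qed.

Lemma S_subspace : subsp (Ssub L).
Proof.
split; first by rewrite inE.
  by move=> u v; rewrite !inE => /eqP u1 /eqP v1; rewrite /vadd /= u1 v1 addr0.
by move=> c u _; rewrite !inE => /eqP u1; rewrite /vscale /= u1 mulr0.
Qed.

Variable delta : nat.
Local Notation m := (k - delta)%N.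
Local Notation GS := (@Gsub L q k delta).

Definition gfun (a : m.+1.-tuple L) (x : L) : L :=
  \sum_(i < m.+1) tnth a i * x ^+ (q ^ i).

Lemma Gsub_mem a x : (x, gfun a x) \in GS a.
Proof. by apply/imsetP; exists x. Qed.

Lemma Gsub_memP a u : u \in GS a -> u = (u.1, gfun a u.1).
Proof. by case/imsetP => x _ ->. Qed.

Lemma gfun0 a : gfun a 0 = 0.
Proof. by rewrite /gfun big1 // => i _; rewrite frob0 mulr0. Qed.

Lemma gfunD a x y : gfun a (x + y) = gfun a x + gfun a y.
Proof. by rewrite /gfun -big_split; apply: eq_bigr => i _; rewrite frobD mulrDr. Qed.

Lemma gfunZ a c x : c \in Fq L q -> gfun a (c * x) = c * gfun a x.
Proof.
move=> hc; rewrite /gfun mulr_sumr; apply: eq_bigr => i _.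
by rewrite exprMn (Fq_pow _ hc) mulrCA.
Qed.

Lemma Gsub_subspace a : subsp (GS a).
Proof.
split.
- by rewrite -{2}(gfun0 a) Gsub_mem.
- move=> u v /Gsub_memP -> /Gsub_memP ->.
  by rewrite /vadd /= -gfunD Gsub_mem.
- by move=> c u hc /Gsub_memP ->; rewrite /vscale /= -gfunZ // Gsub_mem.
Qed.

Lemma calG_subspace X : X \in calG L q k delta -> subsp X.
Proof. by case/imsetP => a _ ->; apply: Gsub_subspace. Qed.

Definition t1 (c : L) : m.+1.-tuple L :=
  [tuple if i == ord0 then c else 0 | i < m.+1].

Lemma gfun_t1 c x : gfun (t1 c) x = c * x.
Proof.
rewrite /gfun big_ord_recl big1 ?addr0.
  by rewrite tnth_mktuple eqxx expn0 expr1.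
by move=> i _; rewrite tnth_mktuple /= mul0r.
Qed.

Lemma t1_in c : GS (t1 c) \in calG L q k delta.
Proof. by apply/imsetP; exists (t1 c). Qed.

Lemma corr_fixS f : correlation q f -> f @: calG L q k delta = calG L q k delta ->
  f (Ssub L) = Ssub L.
Proof.
case=> hsub hinj hsurj hord hG.
have pre X : X \in calG L q k delta ->
    exists2 a, f (GS a) = X & subsp (GS a).
  rewrite -{1}hG => /imsetP[X0 hX0 ->]; case/imsetP: hX0 => a _ ->.
  by exists a => //; apply: Gsub_subspace.
have fT : f setT \subset [set z2].
  have [A hA fA] := hsurj _ z2_subspace.
  by rewrite -fA -hord ?subsetT //; apply: T_subspace.
have f0 : setT \subset f [set z2].
  have [B hB fB] := hsurj _ T_subspace.
  by rewrite -fB -hord //; [rewrite sub1set; case: hB | apply: z2_subspace].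
have hS := S_subspace.
have hfS := hsub _ hS.
have s1 : f (Ssub L) \subset Ssub L.
  apply/subsetP => u hu; rewrite inE; apply/negPn/negP => u1.
  have [a fa ha] := pre _ (t1_in (u.2 / u.1)).
  have uX : u \in f (GS a).
    rewrite fa {1}[u]surjective_pairing -{1}(divfK u1 u.2).
    by rewrite -(gfun_t1 (u.2 / u.1) u.1) Gsub_mem.
  have hZ := subspaceI hfS (hsub _ ha).
  have [W hW fW] := hsurj _ hZ.
  have SW : Ssub L \subset W by rewrite hord // fW subsetIl.
  have aW : GS a \subset W by rewrite hord // fW subsetIr.
  have WT : W = setT.
    apply/setP => -[x y]; rewrite inE.
    have -> : (x, y) = vadd (x, gfun a x) (0, y - gfun a x).
      by rewrite /vadd /= addr0 addrC subrK.
    case: hW => _ hD _; apply: hD.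
      by apply: (subsetP aW); apply: Gsub_mem.
    by apply: (subsetP SW); rewrite inE.
  have : u \in f W by rewrite fW inE hu uX.
  by rewrite WT => /(subsetP fT); rewrite inE => /eqP hu0; move: u1; rewrite hu0 /= eqxx.
apply/eqP; rewrite eqEsubset s1 /=.
pose J := [set u : L * L | (0, u.2) \in f (Ssub L)].
have hJ : subsp J.
  case: (hfS) => h0 hD hZ; split; first by rewrite inE.
    by move=> u v; rewrite !inE => hu hv; have := hD _ _ hu hv; rewrite /vadd /= addr0.
  by move=> c u hc; rewrite !inE => hu; have := hZ _ _ hc hu; rewrite /vscale /= mulr0.
have [A hA fA] := hsurj _ hJ.
have AS : A \subset Ssub L.
  rewrite hord // fA; apply/subsetP => u hu; rewrite inE.
  by have := subsetP s1 _ hu; rewrite inE => /eqP <-; case: u hu.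
have [a fa ha] := pre _ (t1_in 0).
have Aa : A \subset GS a.
  rewrite hord // fA fa; apply/subsetP => u /Gsub_memP ->; rewrite inE /= gfun_t1 mul0r.
  by case: hfS.
have A0 : A \subset [set z2].
  apply/subsetP => u hu; have := subsetP AS _ hu; rewrite inE => /eqP u1.
  have := subsetP Aa _ hu => /Gsub_memP ->; rewrite u1 gfun0 inE //.
have : f [set z2] \subset f A by rewrite -hord //; apply: z2_subspace.
rewrite fA => sJ.
apply/subsetP => -[x y]; rewrite inE /= => /eqP ->.
have := subsetP (subset_trans f0 sJ) (x, y) (in_setT _).
by rewrite inE.
Qed.


Lemma lin_z2 (h : L * L -> L * L) : Fq_linear q h -> h z2 = z2.
Proof.
case=> hD _; have := hD z2 z2; rewrite {1}/vadd /= addr0.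
case: (h z2) => x y [ex ey].
have hx : x = 0 by apply: (@addrI _ x); rewrite addr0 -ex.
have hy : y = 0 by apply: (@addrI _ y); rewrite addr0 -ey.
by rewrite hx hy.
Qed.

Lemma lin_image (h : L * L -> L * L) (B : {set L * L}) :
  Fq_linear q h -> subsp B -> subsp (h @: B).
Proof.
move=> hl [b0 bD bS]; have h0 := lin_z2 hl; case: hl => hD hS; split.
- by rewrite -h0 imset_f.
- by move=> _ _ /imsetP[u hu ->] /imsetP[v hv ->]; rewrite -hD imset_f ?bD.
- by move=> c _ hc /imsetP[u hu ->]; rewrite -hS ?imset_f ?bS.
Qed.

Lemma imset_cancel (h g : L * L -> L * L) (B : {set L * L}) :
  cancel g h -> h @: (g @: B) = B.
Proof.
move=> hg; apply/setP => u; apply/imsetP/idP => [[_ /imsetP[v hv ->] ->]|hu].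
  by rewrite hg.
by exists (g u); [rewrite imset_f | rewrite hg].
Qed.

Hypotheses (d1 : (1 <= delta)%N) (dk : (delta <= k)%N).

Definition phi (u : L * L) : L * L := (u.2 ^+ (q ^ delta), - u.1).
Definition psi (u : L * L) : L * L := (- u.2, u.1 ^+ (q ^ m)).

Lemma md : (q ^ m * q ^ delta)%N = (q ^ k)%N.
Proof. by rewrite -expnD subnK. Qed.

Lemma phiK : cancel phi psi.
Proof. by case=> a b; rewrite /phi /psi /= opprK -exprM mulnC md frobk. Qed.

Lemma psiK : cancel psi phi.
Proof. by case=> a b; rewrite /phi /psi /= opprK -exprM md frobk. Qed.

Lemma phi_lin : Fq_linear q phi.
Proof.
split=> [u v|c u hc]; rewrite /phi /vadd /vscale /=.
  by rewrite frobD opprD.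
by rewrite exprMn (Fq_pow _ hc) mulrN.
Qed.

Lemma psi_lin : Fq_linear q psi.
Proof.
split=> [u v|c u hc]; rewrite /psi /vadd /vscale /=.
  by rewrite frobD opprD.
by rewrite exprMn (Fq_pow _ hc) mulrN.
Qed.


Definition hfun (a : m.+1.-tuple L) (v : L) : L :=
  \sum_(i < m.+1) (tnth a i * v) ^+ (q ^ (k - i)).

Definition Hset (a : m.+1.-tuple L) : {set L * L} := [set (- hfun a v, v) | v : L].

Lemma Tr_sum (I : Type) (r : seq I) (P : pred I) (F : I -> L) :
  Tr (\sum_(i <- r | P i) F i) = \sum_(i <- r | P i) Tr (F i).
Proof. exact: (big_morph _ TrD Tr0). Qed.

Lemma ord_le_k (i : 'I_m.+1) : (i <= k)%N.
Proof. by apply: leq_trans (leq_subr delta k); rewrite -ltnS. Qed.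

Lemma Hset_perp a : Hset a \subset perp (GS a).
Proof.
apply/subsetP => _ /imsetP[v _ ->]; apply/perpPP => _ /imsetP[x _ ->].
rewrite /Defs.form /= mulrN TrD TrN; apply/eqP; rewrite addrC subr_eq0; apply/eqP.
rewrite /gfun /hfun mulr_suml mulr_sumr !Tr_sum; apply: eq_bigr => i _.
rewrite -(Tr_frobn i (x * _)) exprMn -exprM -expnD subnK ?ord_le_k // frobk.
by rewrite mulrCA mulrA.
Qed.

Lemma card_GS a : #|GS a| = #|L|.
Proof.
rewrite /Gsub card_imset // => x y [] //.
Qed.

Lemma card_Hset a : #|Hset a| = #|L|.
Proof. by rewrite /Hset card_imset // => x y [_]. Qed.

Lemma perp_GS a : perp (GS a) = Hset a.
Proof.
apply/eqP; rewrite eq_sym eqEcard Hset_perp /=.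
have := card_perp (Gsub_subspace a); rewrite card_GS cardsT card_prod card_Hset.
have pos : (0 < #|L|)%N by apply/card_gt0P; exists 0.
by move/eqP; rewrite eqn_pmul2l // => /eqP ->.
Qed.


Definition btr (a : m.+1.-tuple L) : m.+1.-tuple L :=
  [tuple (tnth a (rev_ord j)) ^+ (q ^ (k - rev_ord j)) | j < m.+1].

Definition binv (c : m.+1.-tuple L) : m.+1.-tuple L :=
  [tuple (tnth c (rev_ord j)) ^+ (q ^ j) | j < m.+1].

Lemma btr_binv c : btr (binv c) = c.
Proof.
apply: eq_from_tnth => j; rewrite !tnth_mktuple rev_ordK -exprM -expnD.
by rewrite subnKC ?ord_le_k // frobk.
Qed.

Lemma hfun_btr a v : hfun a v = gfun (btr a) (v ^+ (q ^ delta)).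
Proof.
rewrite /gfun (reindex_inj rev_ord_inj) /=; apply: eq_bigr => i _.
rewrite tnth_mktuple rev_ordK exprMn -exprM -expnD.
congr (_ * v ^+ (q ^ _)).
have hi := ltn_ord i.
rewrite /= subSS; lia.
Qed.

Lemma phi_perp_GS a : phi @: perp (GS a) = GS (btr a).
Proof.
rewrite perp_GS; apply/setP => u; apply/imsetP/idP.
  move=> [_ /imsetP[v _ ->] ->]; rewrite /phi /= opprK hfun_btr; exact: Gsub_mem.
move=> /Gsub_memP ->; set w := u.1.
exists (- hfun a (w ^+ (q ^ m)), w ^+ (q ^ m)); first exact: imset_f.
rewrite /phi /= opprK hfun_btr -exprM md frobk //.
Qed.


Lemma GS_in a : GS a \in calG L q k delta.
Proof. by apply/imsetP; exists a. Qed.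

Lemma part1_in X : X \in calG L q k delta -> phi @: perp X \in calG L q k delta.
Proof. by case/imsetP => a _ ->; rewrite phi_perp_GS GS_in. Qed.

Lemma part1_eq : [set phi @: perp X | X in calG L q k delta] = calG L q k delta.
Proof.
apply/setP => Y; apply/imsetP/idP => [[X hX ->]|]; first exact: part1_in.
case/imsetP => c _ ->; exists (GS (binv c)); first exact: GS_in.
by rewrite phi_perp_GS btr_binv.
Qed.

Lemma part1 : exists phi0 : L * L -> L * L,
  [/\ Fq_linear q phi0, bijective phi0,
      (forall X, X \in calG L q k delta -> phi0 @: perp X \in calG L q k delta) &
      [set phi0 @: perp X | X in calG L q k delta] = calG L q k delta].
Proof.
exists phi; split.
- exact: phi_lin.
- by exists psi; [apply: phiK | apply: psiK].
- exact: part1_in.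
- exact: part1_eq.
Qed.

Lemma part2 : exists f, correlation q f /\ f @: calG L q k delta = calG L q k delta.
Proof.
exists (fun X => phi @: perp X); split; last exact: part1_eq.
split.
- by move=> A hA; apply: lin_image phi_lin (perp_subspace A).
- move=> A B hA hB /(imset_inj (can_inj phiK)) h.
  by rewrite -(perpK hA) -(perpK hB) h.
- move=> B hB; exists (perp (psi @: B)); first exact: perp_subspace.
  rewrite perpK ?imset_cancel //; first exact: psiK.
  exact: lin_image psi_lin hB.
- move=> A B hA hB; apply/idP/idP => h.
    by apply: imsetS; apply: perp_anti.
  have h' : perp B \subset perp A.
    by have := imsetS psi h; rewrite !imset_cancel //; apply: phiK.
  by rewrite -(perpK hA) -(perpK hB); apply: perp_anti h'.
Qed.

End Basics.

Unset Implicit Arguments.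
Set Strict Implicit.

Theorem mainTheorem7 (p e k delta : nat) (L : finFieldType) :
  prime p -> (0 < e)%N -> #|L| = ((p ^ e) ^ k)%N ->
  (1 <= delta)%N -> (delta <= k)%N ->
  let q := (p ^ e)%N in
  let G := calG L q k delta in
  (exists phi : L * L -> L * L,
      [/\ Fq_linear q phi, bijective phi,
          (forall X, X \in G -> phi @: perp q k X \in G) &
          [set phi @: perp q k X | X in G] = G])
  /\ (exists f, correlation q f /\ f @: G = G)
  /\ (forall f, correlation q f -> f @: G = G -> f (Ssub L) = Ssub L).
Proof.
move=> pr e0 cL d1 dk q G.
have k0 : (0 < k)%N := leq_trans d1 dk.
split; first exact: part1.
split; first exact: part2.
move=> f; exact: corr_fixS.
Qed.

Print Assumptions mainTheorem7.
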